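(* Let $t,w,x,y,z\in \mathbb{Z}^+$, let $r=0.8$ and $c=1/(8^r-6^r)\approx 0.922$. Then: (i) If $x\geq 8.956z$ and $y\geq 1.036z$ then $x^r+y^r\geq (x+y+z)^r$. (ii) If $x\leq 10.174y$ then $cx^r+y^r\geq(x+y)^r$. (iii) If $0.5y\leq x\leq 8.884y$ then $x^r+y^r\geq (1+1/10.174)^r(x+y)^r$. (iv) If $z<1.98(t+w+x+y)$ and $0<t\leq2.072\cdot\min\{w/1.036, x,y,z/5.884\}$ then $w^r+x^r+y^r+cz^r\geq(t+w+x+y+z)^r$. (v) If $w\leq \min\{x,y,z\}$ then $cx^r+y^r+z^r\geq c(w+x+y+z)^r$. (vi) If $x\geq 6z$ and $y\geq z$ then $cx^r+y^r\geq c(x+y+z)^r$.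
   Context: $\mathbb{Z}^+$ denotes the set of non-negative integers. *)

(* Defs.v *)
(* real powers via powR (a `^ b), with 0 `^ b = 0 for b <> 0. *)
From HB Require Import structures.
From mathcomp Require Import all_boot all_order all_algebra.
From mathcomp Require Import all_classical all_reals all_analysis.
Set Implicit Arguments. Unset Strict Implicit. Unset Printing Implicit Defensive.
Import Order.TTheory GRing.Theory Num.Theory.
Local Open Scope ring_scope.

Definition rexp (R : realType) : R := 4%:R / 5%:R.
Definition cconst (R : realType) : R := 1 / (8%:R `^ rexp R - 6%:R `^ rexp R).
Definition dec3 (R : realType) (m : nat) : R := m%:R / 1000%:R.

(* Main.v *)
Require Import Defs.
From HB Require Import structures.
From mathcomp Require Import all_boot all_order all_algebra.
From mathcomp Require Import all_classical all_reals all_analysis.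
From mathcomp Require Import ring lra.
Import Order.TTheory GRing.Theory Num.Theory.
Local Open Scope ring_scope.

Ltac fld := field; repeat (apply/andP; split); done.
Section Base.
Variable R : realType.
Local Notation pw a := (a `^ rexp R).

Lemma rexpE : rexp R = 5^-1 * 4%:R.
Proof. by rewrite /rexp mulrC. Qed.

Lemma rexp_gt0 : 0 < rexp R.
Proof. rewrite /rexp; lra. Qed.

Lemma rexp_neq0 : rexp R != 0.
Proof. by rewrite gt_eqF // rexp_gt0. Qed.

Lemma root5 (a : R) : 0 <= a ->
  exists b, [/\ 0 <= b, b ^+ 5 = a & pw a = b ^+ 4].
Proof.
move=> a0; exists (a `^ 5^-1); split.
- exact: powR_ge0.
- rewrite -powR_mulrn ?powR_ge0 // -powRrM mulVf ?powRr1 //.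
- by rewrite -powR_mulrn ?powR_ge0 // -powRrM rexpE.
Qed.

Arguments root5 {a}.

Lemma pw0 : pw (0:R) = 0.
Proof. exact: powR0 rexp_neq0. Qed.

Lemma pw_ge0 (a : R) : 0 <= pw a.
Proof. exact: powR_ge0. Qed.

Lemma pwM (a b : R) : 0 <= a -> 0 <= b -> pw (a * b) = pw a * pw b.
Proof. by move=> ha hb; rewrite powRM. Qed.

Lemma pw_lb (L a : R) : 0 <= L -> 0 <= a -> L ^+ 5 <= a ^+ 4 -> L <= pw a.
Proof.
move=> hL ha h; have [b [hb hba ->]] := root5 ha.
rewrite -(ler_pXn2r (n:=5)) // ?qualifE /= ?exprn_ge0 //.
by rewrite -exprM mulnC exprM hba.
Qed.

Lemma pw_ub (U a : R) : 0 <= U -> 0 <= a -> a ^+ 4 <= U ^+ 5 -> pw a <= U.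
Proof.
move=> hU ha h; have [b [hb hba ->]] := root5 ha.
rewrite -(ler_pXn2r (n:=5)) // ?qualifE /= ?exprn_ge0 //.
by rewrite -exprM mulnC exprM hba.
Qed.

Lemma pw_lbq (l p n m : R) : 0 <= l -> 0 < p -> 0 <= n -> 0 < m ->
  l ^+ 5 * m ^+ 4 <= n ^+ 4 * p ^+ 5 -> l / p <= pw (n / m).
Proof.
move=> hl hp hn hm h; apply: pw_lb.
- by rewrite divr_ge0 // ltW.
- by rewrite divr_ge0 // ltW.
rewrite !expr_div_n ler_pdivrMr ?exprn_gt0 // mulrAC ler_pdivlMr ?exprn_gt0 //.
Qed.

Lemma pw_ubq (l p n m : R) : 0 <= l -> 0 < p -> 0 <= n -> 0 < m ->
  n ^+ 4 * p ^+ 5 <= l ^+ 5 * m ^+ 4 -> pw (n / m) <= l / p.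
Proof.
move=> hl hp hn hm h; apply: pw_ub.
- by rewrite divr_ge0 // ltW.
- by rewrite divr_ge0 // ltW.
rewrite !expr_div_n ler_pdivrMr ?exprn_gt0 // mulrAC ler_pdivlMr ?exprn_gt0 //.
Qed.

Lemma tangent (a m : R) : 0 <= a -> 0 < m ->
  pw a <= 5^-1 * pw m + (4%:R / 5%:R) * (pw m / m) * a.
Proof.
move=> ha hm.
have [b [hb hba ->]] := root5 ha.
have [s [hs hsm ->]] := root5 (ltW hm).
have s0 : 0 < s.
  rewrite lt_neqAle hs andbT; apply/eqP => s0; move: hm; rewrite -hsm -s0.
  by rewrite expr0n /= ltxx.
rewrite -hba -hsm.
have key : 0 <= (b - s) ^+ 2 * (4%:R * b ^+ 3 + 3%:R * b ^+ 2 * s + 2%:R * b * s ^+ 2 + s ^+ 3).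
  apply: mulr_ge0; first exact: sqr_ge0.
  by apply: addr_ge0; [apply: addr_ge0; [apply: addr_ge0|]|];
     rewrite ?mulr_ge0 ?exprn_ge0 ?ler0n.
have e : 5^-1 * s ^+ 4 + 4%:R / 5%:R * (s ^+ 4 / s ^+ 5) * b ^+ 5 - b ^+ 4 =
   ((b - s) ^+ 2 * (4%:R * b ^+ 3 + 3%:R * b ^+ 2 * s + 2%:R * b * s ^+ 2 + s ^+ 3)) / (5%:R * s).
  by field; rewrite gt_eqF.
rewrite -subr_ge0 e divr_ge0 // mulr_ge0 // ltW.
Qed.

Arguments tangent {a m}.

Lemma term0 (l a : R) : 0 <= l -> 0 <= a -> l * a = 0 -> l * pw a = 0.
Proof.
move=> hl ha /eqP; rewrite mulf_eq0 => /orP [/eqP -> | /eqP ->]; first by rewrite mul0r.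
by rewrite pw0 mulr0.
Qed.

Arguments term0 {l a}.

Lemma jensen5 (l1 l2 l3 l4 l5 a1 a2 a3 a4 a5 : R) :
  0 <= l1 -> 0 <= l2 -> 0 <= l3 -> 0 <= l4 -> 0 <= l5 ->
  0 <= a1 -> 0 <= a2 -> 0 <= a3 -> 0 <= a4 -> 0 <= a5 ->
  l1 + l2 + l3 + l4 + l5 <= 1 ->
  l1 * pw a1 + l2 * pw a2 + l3 * pw a3 + l4 * pw a4 + l5 * pw a5 <=
  pw (l1 * a1 + l2 * a2 + l3 * a3 + l4 * a4 + l5 * a5).
Proof.
move=> h1 h2 h3 h4 h5 g1 g2 g3 g4 g5 hs.
set m := l1 * a1 + l2 * a2 + l3 * a3 + l4 * a4 + l5 * a5.
have p1 := mulr_ge0 h1 g1; have p2 := mulr_ge0 h2 g2; have p3 := mulr_ge0 h3 g3.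
have p4 := mulr_ge0 h4 g4; have p5 := mulr_ge0 h5 g5.
have [m0|] := eqVneq m 0.
  rewrite m0 pw0 (term0 h1 g1) ?(term0 h2 g2) ?(term0 h3 g3) ?(term0 h4 g4)
    ?(term0 h5 g5); rewrite /m in m0; try lra.
have mge : 0 <= m by rewrite /m; lra.
move=> mn0; have mpos : 0 < m by rewrite lt_neqAle eq_sym mn0.
have t1 := ler_wpM2l h1 (tangent g1 mpos).
have t2 := ler_wpM2l h2 (tangent g2 mpos).
have t3 := ler_wpM2l h3 (tangent g3 mpos).
have t4 := ler_wpM2l h4 (tangent g4 mpos).
have t5 := ler_wpM2l h5 (tangent g5 mpos).
have hP := pw_ge0 m.
have km : pw m / m * m = pw m by rewrite divfK // gt_eqF.
move: t1 t2 t3 t4 t5 km hP.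
set P := pw m; set k := P / m.
move=> t1 t2 t3 t4 t5 km hP.
have q : (l1 + l2 + l3 + l4 + l5) * P <= P by rewrite ler_piMl.
have e : k * m = k * (l1 * a1 + l2 * a2 + l3 * a3 + l4 * a4 + l5 * a5) by [].
nra.
Qed.

Lemma jensen2 (l1 l2 a1 a2 : R) :
  0 <= l1 -> 0 <= l2 -> 0 <= a1 -> 0 <= a2 -> l1 + l2 <= 1 ->
  l1 * pw a1 + l2 * pw a2 <= pw (l1 * a1 + l2 * a2).
Proof.
move=> h1 h2 g1 g2 hs.
have := @jensen5 l1 l2 0 0 0 a1 a2 0 0 0 h1 h2 (lexx 0) (lexx 0) (lexx 0) g1 g2
  (lexx 0) (lexx 0) (lexx 0).
by rewrite !mul0r !addr0; apply; lra.
Qed.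

Lemma jensen4 (l1 l2 l3 l4 a1 a2 a3 a4 : R) :
  0 <= l1 -> 0 <= l2 -> 0 <= l3 -> 0 <= l4 ->
  0 <= a1 -> 0 <= a2 -> 0 <= a3 -> 0 <= a4 -> l1 + l2 + l3 + l4 <= 1 ->
  l1 * pw a1 + l2 * pw a2 + l3 * pw a3 + l4 * pw a4 <=
  pw (l1 * a1 + l2 * a2 + l3 * a3 + l4 * a4).
Proof.
move=> h1 h2 h3 h4 g1 g2 g3 g4 hs.
have := @jensen5 l1 l2 l3 l4 0 a1 a2 a3 a4 0 h1 h2 h3 h4 (lexx 0) g1 g2 g3 g4
  (lexx 0).
by rewrite !mul0r !addr0; apply; lra.
Qed.

End Base.
Arguments pw0 {R}.
Arguments pw_ge0 {R}.
Arguments pwM {R a b}.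
Arguments jensen2 {R l1 l2 a1 a2}.
Arguments jensen4 {R l1 l2 l3 l4 a1 a2 a3 a4}.
Arguments jensen5 {R l1 l2 l3 l4 l5 a1 a2 a3 a4 a5}.
Section P1.
Variable R : realType.
Local Notation pw a := (a `^ rexp R).
Lemma gen1 (a b X Y Z : R) : 0 <= a -> 0 <= b -> pw (a + b + 1) <= pw a + pw b ->
  0 <= X -> 0 <= Y -> 0 <= Z ->
  a * Z <= X -> b * Z <= Y -> pw (X + Y + Z) <= pw X + pw Y.
Proof.
move=> a0 b0 hn hX hY hZ h1 h2.
have [S0|Sn0] := eqVneq (X + Y + Z) 0.
  have -> : X = 0 by nra.
  have -> : Y = 0 by nra.
  have -> : Z = 0 by nra.
  rewrite !addr0 pw0; lra.
have Sp : 0 < X + Y + Z by rewrite lt_neqAle eq_sym Sn0 /=; lra.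
have dp : 0 < a + b + 1 by lra.
have dn : a + b + 1 != 0 by rewrite gt_eqF.
set S := X + Y + Z in Sp Sn0 *.
pose P := S / (a + b + 1).
have hP : 0 <= P by rewrite /P divr_ge0 //; lra.
pose l1 := (X - a * Z) / S.
pose l2 := (Y - b * Z) / S.
pose l3 := ((a + b + 1) * Z) / S.
have g1 : 0 <= l1 by rewrite /l1 divr_ge0 //; lra.
have g2 : 0 <= l2 by rewrite /l2 divr_ge0 //; lra.
have g3 : 0 <= l3 by rewrite /l3 divr_ge0 //; nra.
have hs : l1 + l2 + l3 = 1 by rewrite /l1 /l2 /l3 /S; fld.
clearbody S.
have ha : 0 <= a * P by rewrite mulr_ge0.
have hb : 0 <= b * P by rewrite mulr_ge0.
have s13 : l1 + l3 <= 1 by lra.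
have s23 : l2 + l3 <= 1 by lra.
have jX := jensen2 g1 g3 (ltW Sp) ha s13.
have jY := jensen2 g2 g3 (ltW Sp) hb s23.
have eX : l1 * S + l3 * (a * P) = X.
  by rewrite /l1 /l3 /P; fld.
have eY : l2 * S + l3 * (b * P) = Y.
  by rewrite /l2 /l3 /P; fld.
rewrite eX (pwM a0 hP) in jX; rewrite eY (pwM b0 hP) in jY.
have eSP : pw S = pw (a + b + 1) * pw P.
  rewrite -pwM //; last by lra.
  by congr (_ `^ _); rewrite /P; fld.
have hn' : 0 <= l3 * pw P * (pw a + pw b - pw (a + b + 1)).
  apply: mulr_ge0; [apply: mulr_ge0 => //; exact: pw_ge0 | lra].
have hsum : (l1 + l2 + l3) * pw S = pw S by rewrite hs mul1r.
rewrite eSP in jX jY hsum *.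
nra.
Qed.
End P1.
Section P2.
Variable R : realType.
Local Notation pw a := (a `^ rexp R).

Lemma gen2 (c k X Y : R) : 0 <= c -> 0 < k -> pw (k + 1) <= c * pw k + 1 ->
  0 <= X -> 0 <= Y -> X <= k * Y -> pw (X + Y) <= c * pw X + pw Y.
Proof.
move=> c0 k0 hn hX hY h1.
have [S0|Sn0] := eqVneq (X + Y) 0.
  have -> : X = 0 by lra.
  have -> : Y = 0 by lra.
  rewrite !addr0 pw0; lra.
have Sp : 0 < X + Y by rewrite lt_neqAle eq_sym Sn0 /=; lra.
have dp : 0 < k + 1 by lra.
have dn : k + 1 != 0 by rewrite gt_eqF.
have kn : k != 0 by rewrite gt_eqF.
set S := X + Y in Sp Sn0 *.
pose P := S / (k + 1).
have hP : 0 <= P by rewrite /P divr_ge0 //; lra.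
pose l1 := (Y - X / k) / S.
pose l2 := ((k + 1) * (X / k)) / S.
have Xk : X / k <= Y by rewrite ler_pdivrMr // mulrC.
have g1 : 0 <= l1 by rewrite /l1 divr_ge0 //; lra.
have g2 : 0 <= l2.
  apply: divr_ge0; [apply: mulr_ge0; [lra | apply: divr_ge0; lra] | lra].
have hs : l1 + l2 = 1 by rewrite /l1 /l2 /S; fld.
clearbody S.
have ha : 0 <= k * P by rewrite mulr_ge0 //; lra.
have jX := jensen2 g2 (lexx 0) ha (lexx 0) ltac:(lra).
have jY := jensen2 g1 g2 (ltW Sp) hP ltac:(lra).
rewrite !mul0r !addr0 in jX.
have eX : l2 * (k * P) = X by rewrite /l2 /P; fld.
have eY : l1 * S + l2 * P = Y by rewrite /l1 /l2 /P; fld.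
rewrite eX (pwM (ltW k0) hP) in jX; rewrite eY in jY.
have eSP : pw S = pw (k + 1) * pw P.
  rewrite -pwM //; last by lra.
  by congr (_ `^ _); rewrite /P; fld.
have hn' : 0 <= l2 * pw P * (c * pw k + 1 - pw (k + 1)).
  apply: mulr_ge0; [apply: mulr_ge0 => //; exact: pw_ge0 | lra].
have hsum : (l1 + l2) * pw S = pw S by rewrite hs mul1r.
have cj : c * (l2 * (pw k * pw P)) <= c * pw X by rewrite ler_wpM2l.
rewrite eSP in hsum *.
nra.
Qed.

Lemma gen3 (K p k X Y : R) : 0 <= K -> 0 < p -> p < k ->
  K * pw (p + 1) <= pw p + 1 -> K * pw (k + 1) <= pw k + 1 ->
  0 <= X -> 0 <= Y -> p * Y <= X -> X <= k * Y -> K * pw (X + Y) <= pw X + pw Y.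
Proof.
move=> K0 p0 pk hn1 hn2 hX hY h1 h2.
have [S0|Sn0] := eqVneq (X + Y) 0.
  have -> : X = 0 by nra.
  have -> : Y = 0 by nra.
  rewrite !addr0 pw0; nra.
have Sp : 0 < X + Y by rewrite lt_neqAle eq_sym Sn0 /=; lra.
have d1n : p + 1 != 0 by rewrite gt_eqF //; lra.
have d2n : k + 1 != 0 by rewrite gt_eqF //; lra.
have kpn : k - p != 0 by rewrite gt_eqF //; lra.
set S := X + Y in Sp Sn0 *.
pose P1 := S / (p + 1).
pose P2 := S / (k + 1).
have hP1 : 0 <= P1 by rewrite /P1 divr_ge0 //; lra.
have hP2 : 0 <= P2 by rewrite /P2 divr_ge0 //; lra.
pose l1 := ((k * Y - X) / (k - p)) * (p + 1) / S.
pose l2 := ((X - p * Y) / (k - p)) * (k + 1) / S.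
have g1 : 0 <= l1.
  apply: divr_ge0; [apply: mulr_ge0; [apply: divr_ge0; nra | lra] | lra].
have g2 : 0 <= l2.
  apply: divr_ge0; [apply: mulr_ge0; [apply: divr_ge0; nra | lra] | lra].
have hs : l1 + l2 = 1 by rewrite /l1 /l2 /S; fld.
clearbody S.
have ha : 0 <= p * P1 by rewrite mulr_ge0 //; lra.
have hb : 0 <= k * P2 by rewrite mulr_ge0 //; lra.
have jX := jensen2 g1 g2 ha hb ltac:(lra).
have jY := jensen2 g1 g2 hP1 hP2 ltac:(lra).
have eX : l1 * (p * P1) + l2 * (k * P2) = X by rewrite /l1 /l2 /P1 /P2; fld.
have eY : l1 * P1 + l2 * P2 = Y by rewrite /l1 /l2 /P1 /P2; fld.
rewrite eX (pwM (ltW p0) hP1) (pwM (_ : 0 <= k) hP2) in jX; last by lra.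
rewrite eY in jY.
have eS1 : pw S = pw (p + 1) * pw P1.
  rewrite -pwM //; last by lra.
  by congr (_ `^ _); rewrite /P1; fld.
have eS2 : pw S = pw (k + 1) * pw P2.
  rewrite -pwM //; last by lra.
  by congr (_ `^ _); rewrite /P2; fld.
have q1 : 0 <= l1 * pw P1 * (pw p + 1 - K * pw (p + 1)).
  apply: mulr_ge0; [apply: mulr_ge0 => //; exact: pw_ge0 | lra].
have q2 : 0 <= l2 * pw P2 * (pw k + 1 - K * pw (k + 1)).
  apply: mulr_ge0; [apply: mulr_ge0 => //; exact: pw_ge0 | lra].
have hsum : K * pw S = l1 * (K * (pw (p + 1) * pw P1)) + l2 * (K * (pw (k + 1) * pw P2)).
  rewrite -eS1 -eS2.
  have -> : l1 * (K * pw S) + l2 * (K * pw S) = (l1 + l2) * (K * pw S) by ring.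
  by rewrite hs mul1r.
nra.
Qed.

Lemma gen5 (c W X Y Z : R) : 0 <= c -> c <= 1 -> c * pw 4 <= c + 2 ->
  0 <= W -> W <= X -> W <= Y -> W <= Z ->
  c * pw (W + X + Y + Z) <= c * pw X + pw Y + pw Z.
Proof.
move=> c0 c1 hn hW h1 h2 h3.
have [S0|Sn0] := eqVneq (W + X + Y + Z) 0.
  have -> : X = 0 by lra.
  have -> : Y = 0 by lra.
  have -> : Z = 0 by lra.
  have -> : W = 0 by lra.
  rewrite !addr0 pw0; lra.
have Sp : 0 < W + X + Y + Z by rewrite lt_neqAle eq_sym Sn0 /=; lra.
set S := W + X + Y + Z in Sp Sn0 *.
pose P := S / 4.
have hP : 0 <= P by rewrite /P divr_ge0 //; lra.
pose l4 := (4 * W) / S.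
pose lx := (X - W) / S.
pose ly := (Y - W) / S.
pose lz := (Z - W) / S.
have g4 : 0 <= l4 by rewrite /l4 divr_ge0 //; lra.
have gx : 0 <= lx by rewrite /lx divr_ge0 //; lra.
have gy : 0 <= ly by rewrite /ly divr_ge0 //; lra.
have gz : 0 <= lz by rewrite /lz divr_ge0 //; lra.
have hs : l4 + lx + ly + lz = 1 by rewrite /l4 /lx /ly /lz /S; fld.
clearbody S.
have jX := jensen2 gx g4 (ltW Sp) hP ltac:(lra).
have jY := jensen2 gy g4 (ltW Sp) hP ltac:(lra).
have jZ := jensen2 gz g4 (ltW Sp) hP ltac:(lra).
have eX : lx * S + l4 * P = X by rewrite /lx /l4 /P; fld.
have eY : ly * S + l4 * P = Y by rewrite /ly /l4 /P; fld.
have eZ : lz * S + l4 * P = Z by rewrite /lz /l4 /P; fld.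
rewrite eX in jX; rewrite eY in jY; rewrite eZ in jZ.
have eSP : pw S = pw 4 * pw P.
  have h4 : (0:R) <= 4 by lra.
  rewrite -(pwM h4 hP).
  by congr (_ `^ _); rewrite /P; fld.
have q1 : 0 <= l4 * pw P * (c + 2 - c * pw 4).
  apply: mulr_ge0; [apply: mulr_ge0 => //; exact: pw_ge0 | lra].
have q2 : 0 <= (ly + lz) * pw S * (1 - c).
  apply: mulr_ge0; [apply: mulr_ge0; [lra | exact: pw_ge0] | lra].
have cj : c * (lx * pw S + l4 * pw P) <= c * pw X by rewrite ler_wpM2l.
have hsum : c * pw S = c * ((l4 + lx + ly + lz) * pw S) by rewrite hs mul1r.
have e4c : c * (l4 * pw S) = c * (l4 * (pw 4 * pw P)) by rewrite eSP.
nra.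
Qed.

Lemma gen6 (c X Y Z : R) : 0 <= c -> c <= 1 -> c * pw 8 <= c * pw 6 + 1 ->
  0 <= X -> 0 <= Y -> 0 <= Z -> 6 * Z <= X -> Z <= Y ->
  c * pw (X + Y + Z) <= c * pw X + pw Y.
Proof.
move=> c0 c1 hn hX hY hZ h1 h2.
have [S0|Sn0] := eqVneq (X + Y + Z) 0.
  have -> : X = 0 by lra.
  have -> : Y = 0 by lra.
  have -> : Z = 0 by lra.
  rewrite !addr0 pw0; lra.
have Sp : 0 < X + Y + Z by rewrite lt_neqAle eq_sym Sn0 /=; lra.
set S := X + Y + Z in Sp Sn0 *.
pose P := S / 8.
have hP : 0 <= P by rewrite /P divr_ge0 //; lra.
pose l1 := (X - 6 * Z) / S.
pose l2 := (Y - Z) / S.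
pose l3 := (8 * Z) / S.
have g1 : 0 <= l1 by rewrite /l1 divr_ge0 //; lra.
have g2 : 0 <= l2 by rewrite /l2 divr_ge0 //; lra.
have g3 : 0 <= l3 by rewrite /l3 divr_ge0 //; lra.
have hs : l1 + l2 + l3 = 1 by rewrite /l1 /l2 /l3 /S; fld.
clearbody S.
have h6 : 0 <= 6 * P by rewrite mulr_ge0 //; lra.
have jX := jensen2 g1 g3 (ltW Sp) h6 ltac:(lra).
have jY := jensen2 g2 g3 (ltW Sp) hP ltac:(lra).
have eX : l1 * S + l3 * (6 * P) = X by rewrite /l1 /l3 /P; fld.
have eY : l2 * S + l3 * P = Y by rewrite /l2 /l3 /P; fld.
have h6' : (0:R) <= 6 by lra.
rewrite eX (pwM h6' hP) in jX; rewrite eY in jY.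
have eSP : pw S = pw 8 * pw P.
  have h8 : (0:R) <= 8 by lra.
  rewrite -(pwM h8 hP).
  by congr (_ `^ _); rewrite /P; fld.
have q1 : 0 <= l3 * pw P * (c * pw 6 + 1 - c * pw 8).
  apply: mulr_ge0; [apply: mulr_ge0 => //; exact: pw_ge0 | lra].
have q2 : 0 <= l2 * pw S * (1 - c).
  apply: mulr_ge0; [apply: mulr_ge0; [lra | exact: pw_ge0] | lra].
have cj : c * (l1 * pw S + l3 * (pw 6 * pw P)) <= c * pw X by rewrite ler_wpM2l.
have hsum : c * pw S = c * ((l1 + l2 + l3) * pw S) by rewrite hs mul1r.
have e3c : c * (l3 * pw S) = c * (l3 * (pw 8 * pw P)) by rewrite eSP.
nra.
Qed.

End P2.
Section P4.
Variable R : realType.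
Local Notation pw a := (a `^ rexp R).

Ltac pos := repeat first [ assumption | apply: divr_ge0 | apply: mulr_ge0 | apply: addr_ge0 | rewrite invr_ge0 | apply: ltW ].

Lemma sub_le1 (a b : R) : a + b = 1 -> 0 <= b -> a <= 1.
Proof. move=> h hb; rewrite -h lerDl. exact: hb. Qed.

Lemma gen4 (c g z0 e T W X Y Z : R) :
  0 <= c -> 0 < g -> 0 < z0 -> 0 < e -> 0 < e * (1 + 1/2 + 2 * g) - z0 ->
  pw (1 + 1/2 + 2 * g + z0) <= pw (1/2) + 2 * pw g + c * pw z0 ->
  pw (1 + 1/2 + 2 * g + z0 + (e * (1 + 1/2 + 2 * g) - z0)) <=
     pw (1/2) + 2 * pw g + c * pw (z0 + (e * (1 + 1/2 + 2 * g) - z0)) ->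
  pw (1 + e) <= 1 + c * pw e ->
  0 < T -> T / 2 <= W -> g * T <= X -> g * T <= Y -> z0 * T <= Z ->
  Z <= e * (T + W + X + Y) ->
  pw (T + W + X + Y + Z) <= pw W + pw X + pw Y + c * pw Z.
Proof.
move=> c0 g0 z00 e0 A0 n1 n2 n3 T0 hW hX hY hZ1 hZ2.
have g0' : 0 <= g by lra.
have z0' : 0 <= z0 by lra.
have e0' : 0 <= e by lra.
have T0' : 0 <= T by lra.
have h12 : (0:R) <= 1/2 by lra.
have zA : 0 <= z0 + (e * (1 + 1/2 + 2 * g) - z0) by lra.
have dtp : 0 < 1 + 1/2 + 2 * g + z0 by lra.
have drp : 0 < 1 + 1/2 + 2 * g + z0 + (e * (1 + 1/2 + 2 * g) - z0) by lra.
have dep : 0 < 1 + e by lra.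
have Sp : 0 < T + W + X + Y + Z.
  have : 0 <= g * T by rewrite mulr_ge0.
  have : 0 <= z0 * T by rewrite mulr_ge0.
  lra.
have w0 : 0 <= W - T / 2 by rewrite subr_ge0.
have x0 : 0 <= X - g * T by rewrite subr_ge0.
have y0 : 0 <= Y - g * T by rewrite subr_ge0.
have zz0 : 0 <= Z - z0 * T by rewrite subr_ge0.
have Ssub : Z - z0 * T <= e * (T + W + X + Y) - z0 * T by rewrite lerD2r.
set A := e * (1 + 1/2 + 2 * g) - z0 in A0 n2 zA drp.
set dt := 1 + 1/2 + 2 * g + z0 in n1 n2 dtp drp.
set dr := dt + A in n2 drp.
set de := 1 + e in n3 dep.
have Sn : T + W + X + Y + Z != 0 by rewrite gt_eqF.
set w' := W - T / 2 in w0. set x' := X - g * T in x0. set y' := Y - g * T in y0.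
pose Q := A * T + e * (w' + x' + y').
have eQ : Q = e * (T + W + X + Y) - z0 * T by rewrite /Q /A /w' /x' /y'; ring.
have Qp : 0 < Q.
  have h1 : 0 < A * T by rewrite mulr_gt0.
  have h2 : 0 <= e * (w' + x' + y') by exact: mulr_ge0 e0' (addr_ge0 (addr_ge0 w0 x0) y0).
  by rewrite /Q; move: h1 h2; clear; move=> *; lra.
have Qn : Q != 0 by rewrite gt_eqF.
pose th := (Z - z0 * T) / Q.
have th0 : 0 <= th by exact: divr_ge0 zz0 (ltW Qp).
have th1 : th <= 1 by rewrite /th ler_pdivrMr // mul1r eQ.
have th1' : 0 <= 1 - th by rewrite subr_ge0.
set S := T + W + X + Y + Z in Sp Sn *.
have Sge : 0 <= S by rewrite ltW.
pose Pt := S / dt. pose Pr := S / dr. pose Pe := S / de.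
have hPt : 0 <= Pt by exact: divr_ge0 Sge (ltW dtp).
have hPr : 0 <= Pr by exact: divr_ge0 Sge (ltW drp).
have hPe : 0 <= Pe by exact: divr_ge0 Sge (ltW dep).
pose lqt := (1 - th) * T * dt / S.
pose lrt := th * T * dr / S.
pose lew := (1 - th) * w' / S.
pose lrw := th * w' * de / S.
pose lex := (1 - th) * x' / S.
pose lrx := th * x' * de / S.
pose ley := (1 - th) * y' / S.
pose lry := th * y' * de / S.
have gqt : 0 <= lqt by exact: divr_ge0 (mulr_ge0 (mulr_ge0 th1' T0') (ltW dtp)) Sge.
have grt : 0 <= lrt by exact: divr_ge0 (mulr_ge0 (mulr_ge0 th0 T0') (ltW drp)) Sge.
have gew : 0 <= lew by exact: divr_ge0 (mulr_ge0 th1' w0) Sge.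
have gex : 0 <= lex by exact: divr_ge0 (mulr_ge0 th1' x0) Sge.
have gey : 0 <= ley by exact: divr_ge0 (mulr_ge0 th1' y0) Sge.
have grw : 0 <= lrw by exact: divr_ge0 (mulr_ge0 (mulr_ge0 th0 w0) (ltW dep)) Sge.
have grx : 0 <= lrx by exact: divr_ge0 (mulr_ge0 (mulr_ge0 th0 x0) (ltW dep)) Sge.
have gry : 0 <= lry by exact: divr_ge0 (mulr_ge0 (mulr_ge0 th0 y0) (ltW dep)) Sge.
have dtn : dt != 0 by rewrite gt_eqF.
have drn : dr != 0 by rewrite gt_eqF.
have den : de != 0 by rewrite gt_eqF.
have hs : lqt + lrt + lew + lrw + lex + lrx + ley + lry = 1.
  rewrite /lqt /lrt /lew /lrw /lex /lrx /ley /lry /th /dr /de /S.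
  move: Qn; rewrite eQ => Qn.
  rewrite /dt /A /w' /x' /y'; fld.
have eW : lqt * (1/2 * Pt) + lrt * (1/2 * Pr) + lew * S + lrw * Pe = W.
  rewrite /lqt /lrt /lew /lrw /Pt /Pr /Pe /w'; fld.
have eX : lqt * (g * Pt) + lrt * (g * Pr) + lex * S + lrx * Pe = X.
  rewrite /lqt /lrt /lex /lrx /Pt /Pr /Pe /x'; fld.
have eY : lqt * (g * Pt) + lrt * (g * Pr) + ley * S + lry * Pe = Y.
  rewrite /lqt /lrt /ley /lry /Pt /Pr /Pe /y'; fld.
have eZ : lqt * (z0 * Pt) + lrt * ((z0 + A) * Pr) + lrw * (e * Pe) + lrx * (e * Pe)
   + lry * (e * Pe) = Z.
  rewrite /lqt /lrt /lrw /lrx /lry /Pt /Pr /Pe /th /Q /dr; fld.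
have eSt : pw S = pw dt * pw Pt.
  rewrite -(pwM (ltW dtp) hPt); congr (_ `^ _); rewrite /Pt; fld.
have eSr : pw S = pw dr * pw Pr.
  rewrite -(pwM (ltW drp) hPr); congr (_ `^ _); rewrite /Pr; fld.
have eSe : pw S = pw de * pw Pe.
  rewrite -(pwM (ltW dep) hPe); congr (_ `^ _); rewrite /Pe; fld.
have sW : lqt + lrt + lew + lrw <= 1.
  apply: (@sub_le1 _ (lex + lrx + ley + lry)); first by rewrite -hs; ring.
  exact: addr_ge0 (addr_ge0 (addr_ge0 gex grx) gey) gry.
have sX : lqt + lrt + lex + lrx <= 1.
  apply: (@sub_le1 _ (lew + lrw + ley + lry)); first by rewrite -hs; ring.
  exact: addr_ge0 (addr_ge0 (addr_ge0 gew grw) gey) gry.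
have sY : lqt + lrt + ley + lry <= 1.
  apply: (@sub_le1 _ (lew + lrw + lex + lrx)); first by rewrite -hs; ring.
  exact: addr_ge0 (addr_ge0 (addr_ge0 gew grw) gex) grx.
have sZ : lqt + lrt + lrw + lrx + lry <= 1.
  apply: (@sub_le1 _ (lew + lex + ley)); first by rewrite -hs; ring.
  exact: addr_ge0 (addr_ge0 gew gex) gey.
clearbody lqt lrt lew lrw lex lrx ley lry Pt Pr Pe th Q.
clearbody S w' x' y' A dt dr de.
have pwt : 0 <= 1/2 * Pt by apply: mulr_ge0.
have pwr : 0 <= 1/2 * Pr by apply: mulr_ge0.
have pgt : 0 <= g * Pt by apply: mulr_ge0.
have pgr : 0 <= g * Pr by apply: mulr_ge0.
have pzt : 0 <= z0 * Pt by apply: mulr_ge0.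
have pzr : 0 <= (z0 + A) * Pr by apply: mulr_ge0.
have pze : 0 <= e * Pe by apply: mulr_ge0.
have jW := jensen4 gqt grt gew grw pwt pwr Sge hPe sW.
have jX := jensen4 gqt grt gex grx pgt pgr Sge hPe sX.
have jY := jensen4 gqt grt gey gry pgt pgr Sge hPe sY.
have jZ := jensen5 gqt grt grw grx gry pzt pzr pze pze pze sZ.
rewrite eW (pwM h12 hPt) (pwM h12 hPr) in jW.
rewrite eX (pwM g0' hPt) (pwM g0' hPr) in jX.
rewrite eY (pwM g0' hPt) (pwM g0' hPr) in jY.
rewrite eZ (pwM z0' hPt) (pwM zA hPr) (pwM e0' hPe) in jZ.
have q1 : 0 <= lqt * pw Pt * (pw (1/2) + 2 * pw g + c * pw z0 - pw dt).
  by apply: mulr_ge0; [apply: mulr_ge0; [exact: gqt | exact: pw_ge0] | rewrite subr_ge0].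
have q2 : 0 <= lrt * pw Pr * (pw (1/2) + 2 * pw g + c * pw (z0 + A) - pw dr).
  by apply: mulr_ge0; [apply: mulr_ge0; [exact: grt | exact: pw_ge0] | rewrite subr_ge0].
have q3 : 0 <= (lrw + lrx + lry) * pw Pe * (1 + c * pw e - pw de).
  by apply: mulr_ge0; [apply: mulr_ge0; [exact: (addr_ge0 (addr_ge0 grw grx) gry) | exact: pw_ge0] | rewrite subr_ge0].
have cj := ler_wpM2l c0 jZ.
have hsum : pw S = (lqt + lrt + lew + lrw + lex + lrx + ley + lry) * pw S.
  by rewrite hs mul1r.
have e1 : lqt * pw S = lqt * (pw dt * pw Pt) by rewrite -eSt.
have e2 : lrt * pw S = lrt * (pw dr * pw Pr) by rewrite -eSr.
have e3 : (lrw + lrx + lry) * pw S = (lrw + lrx + lry) * (pw de * pw Pe) by rewrite -eSe.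
move: jW jX jY cj q1 q2 q3 hsum e1 e2 e3.
move: (pw S) (pw Pt) (pw Pr) (pw Pe) (pw dt) (pw dr) (pw de) (pw W) (pw X) (pw Y) (pw Z)
  (pw (1/2)) (pw g) (pw z0) (pw (z0 + A)) (pw e).
clear.
move=> *; lra.
Qed.
End P4.
Section Num.
Variable R : realType.
Local Notation pw a := (a `^ rexp R).
Lemma lb_8956 : ((((5 * 1000 + 776) * 1000 + 852) * 1000 + 354)) / ((((1 * 1000) * 1000) * 1000)) <= pw (8956%:R / 1000%:R : R).
Proof. have h := @pw_lbq R ((((5 * 1000 + 776) * 1000 + 852) * 1000 + 354)) ((((1 * 1000) * 1000) * 1000)) (8956%:R) (1000%:R). rewrite ?divr1 in h. by apply: h; lra. Qed.
Lemma lb_1036 : ((((1 * 1000 + 28) * 1000 + 697) * 1000 + 784)) / ((((1 * 1000) * 1000) * 1000)) <= pw (1036%:R / 1000%:R : R).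
Proof. have h := @pw_lbq R ((((1 * 1000 + 28) * 1000 + 697) * 1000 + 784)) ((((1 * 1000) * 1000) * 1000)) (1036%:R) (1000%:R). rewrite ?divr1 in h. by apply: h; lra. Qed.
Lemma ub_10992 : pw (10992%:R / 1000%:R : R) <= ((((6 * 1000 + 805) * 1000 + 520) * 1000 + 959)) / ((((1 * 1000) * 1000) * 1000)).
Proof. have h := @pw_ubq R ((((6 * 1000 + 805) * 1000 + 520) * 1000 + 959)) ((((1 * 1000) * 1000) * 1000)) (10992%:R) (1000%:R). rewrite ?divr1 in h. by apply: h; lra. Qed.
Lemma lb_8 : ((((5 * 1000 + 278) * 1000 + 31) * 1000 + 643)) / ((((1 * 1000) * 1000) * 1000)) <= pw (8%:R : R).
Proof. have h := @pw_lbq R ((((5 * 1000 + 278) * 1000 + 31) * 1000 + 643)) ((((1 * 1000) * 1000) * 1000)) (8%:R) (1). rewrite ?divr1 in h. by apply: h; lra. Qed.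
Lemma ub_8 : pw (8%:R : R) <= ((((5 * 1000 + 278) * 1000 + 31) * 1000 + 644)) / ((((1 * 1000) * 1000) * 1000)).
Proof. have h := @pw_ubq R ((((5 * 1000 + 278) * 1000 + 31) * 1000 + 644)) ((((1 * 1000) * 1000) * 1000)) (8%:R) (1). rewrite ?divr1 in h. by apply: h; lra. Qed.
Lemma lb_6 : ((((4 * 1000 + 192) * 1000 + 962) * 1000 + 712)) / ((((1 * 1000) * 1000) * 1000)) <= pw (6%:R : R).
Proof. have h := @pw_lbq R ((((4 * 1000 + 192) * 1000 + 962) * 1000 + 712)) ((((1 * 1000) * 1000) * 1000)) (6%:R) (1). rewrite ?divr1 in h. by apply: h; lra. Qed.
Lemma ub_6 : pw (6%:R : R) <= ((((4 * 1000 + 192) * 1000 + 962) * 1000 + 713)) / ((((1 * 1000) * 1000) * 1000)).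
Proof. have h := @pw_ubq R ((((4 * 1000 + 192) * 1000 + 962) * 1000 + 713)) ((((1 * 1000) * 1000) * 1000)) (6%:R) (1). rewrite ?divr1 in h. by apply: h; lra. Qed.
Lemma lb_10174 : ((((6 * 1000 + 397) * 1000 + 250) * 1000 + 937)) / ((((1 * 1000) * 1000) * 1000)) <= pw (10174%:R / 1000%:R : R).
Proof. have h := @pw_lbq R ((((6 * 1000 + 397) * 1000 + 250) * 1000 + 937)) ((((1 * 1000) * 1000) * 1000)) (10174%:R) (1000%:R). rewrite ?divr1 in h. by apply: h; lra. Qed.
Lemma ub_11174 : pw (11174%:R / 1000%:R : R) <= ((((6 * 1000 + 895) * 1000 + 518) * 1000 + 590)) / ((((1 * 1000) * 1000) * 1000)).
Proof. have h := @pw_ubq R ((((6 * 1000 + 895) * 1000 + 518) * 1000 + 590)) ((((1 * 1000) * 1000) * 1000)) (11174%:R) (1000%:R). rewrite ?divr1 in h. by apply: h; lra. Qed.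
Lemma ub_K : pw (11174%:R / 10174%:R : R) <= ((((1 * 1000 + 77) * 1000 + 887) * 1000 + 777)) / ((((1 * 1000) * 1000) * 1000)).
Proof. have h := @pw_ubq R ((((1 * 1000 + 77) * 1000 + 887) * 1000 + 777)) ((((1 * 1000) * 1000) * 1000)) (11174%:R) (10174%:R). rewrite ?divr1 in h. by apply: h; lra. Qed.
Lemma lb_500 : (((574 * 1000 + 349) * 1000 + 177)) / ((((1 * 1000) * 1000) * 1000)) <= pw (500%:R / 1000%:R : R).
Proof. have h := @pw_lbq R (((574 * 1000 + 349) * 1000 + 177)) ((((1 * 1000) * 1000) * 1000)) (500%:R) (1000%:R). rewrite ?divr1 in h. by apply: h; lra. Qed.
Lemma ub_1500 : pw (1500%:R / 1000%:R : R) <= ((((1 * 1000 + 383) * 1000 + 161) * 1000 + 868)) / ((((1 * 1000) * 1000) * 1000)).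
Proof. have h := @pw_ubq R ((((1 * 1000 + 383) * 1000 + 161) * 1000 + 868)) ((((1 * 1000) * 1000) * 1000)) (1500%:R) (1000%:R). rewrite ?divr1 in h. by apply: h; lra. Qed.
Lemma lb_8884 : ((((5 * 1000 + 739) * 1000 + 668) * 1000 + 894)) / ((((1 * 1000) * 1000) * 1000)) <= pw (8884%:R / 1000%:R : R).
Proof. have h := @pw_lbq R ((((5 * 1000 + 739) * 1000 + 668) * 1000 + 894)) ((((1 * 1000) * 1000) * 1000)) (8884%:R) (1000%:R). rewrite ?divr1 in h. by apply: h; lra. Qed.
Lemma ub_9884 : pw (9884%:R / 1000%:R : R) <= ((((6 * 1000 + 250) * 1000 + 952) * 1000 + 365)) / ((((1 * 1000) * 1000) * 1000)).
Proof. have h := @pw_ubq R ((((6 * 1000 + 250) * 1000 + 952) * 1000 + 365)) ((((1 * 1000) * 1000) * 1000)) (9884%:R) (1000%:R). rewrite ?divr1 in h. by apply: h; lra. Qed.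
Lemma lb_half : (((574 * 1000 + 349) * 1000 + 177)) / ((((1 * 1000) * 1000) * 1000)) <= pw (1 / 2%:R : R).
Proof. have h := @pw_lbq R (((574 * 1000 + 349) * 1000 + 177)) ((((1 * 1000) * 1000) * 1000)) (1) (2%:R). rewrite ?divr1 in h. by apply: h; lra. Qed.
Lemma lb_g : (((558 * 1000 + 326) * 1000 + 445)) / ((((1 * 1000) * 1000) * 1000)) <= pw (1000%:R / 2072%:R : R).
Proof. have h := @pw_lbq R (((558 * 1000 + 326) * 1000 + 445)) ((((1 * 1000) * 1000) * 1000)) (1000%:R) (2072%:R). rewrite ?divr1 in h. by apply: h; lra. Qed.
Lemma lb_z0 : ((((2 * 1000 + 304) * 1000 + 763) * 1000 + 303)) / ((((1 * 1000) * 1000) * 1000)) <= pw (5884%:R / 2072%:R : R).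
Proof. have h := @pw_lbq R ((((2 * 1000 + 304) * 1000 + 763) * 1000 + 303)) ((((1 * 1000) * 1000) * 1000)) (5884%:R) (2072%:R). rewrite ?divr1 in h. by apply: h; lra. Qed.
Lemma lb_z0A : ((((3 * 1000 + 554) * 1000 + 848) * 1000 + 217)) / ((((1 * 1000) * 1000) * 1000)) <= pw ((126 * 1000 + 423) / (25 * 1000 + 900) : R).
Proof. have h := @pw_lbq R ((((3 * 1000 + 554) * 1000 + 848) * 1000 + 217)) ((((1 * 1000) * 1000) * 1000)) ((126 * 1000 + 423)) ((25 * 1000 + 900)). rewrite ?divr1 in h. by apply: h; lra. Qed.
Lemma ub_dt : pw (1374%:R / 259%:R : R) <= ((((3 * 1000 + 799) * 1000 + 702) * 1000 + 328)) / ((((1 * 1000) * 1000) * 1000)).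
Proof. have h := @pw_ubq R ((((3 * 1000 + 799) * 1000 + 702) * 1000 + 328)) ((((1 * 1000) * 1000) * 1000)) (1374%:R) (259%:R). rewrite ?divr1 in h. by apply: h; lra. Qed.
Lemma ub_dtA : pw ((190 * 1000 + 273) / (25 * 1000 + 900) : R) <= ((((4 * 1000 + 930) * 1000 + 170) * 1000 + 302)) / ((((1 * 1000) * 1000) * 1000)).
Proof. have h := @pw_ubq R ((((4 * 1000 + 930) * 1000 + 170) * 1000 + 302)) ((((1 * 1000) * 1000) * 1000)) ((190 * 1000 + 273)) ((25 * 1000 + 900)). rewrite ?divr1 in h. by apply: h; lra. Qed.
Lemma lb_e : ((((1 * 1000 + 727) * 1000 + 158) * 1000 + 332)) / ((((1 * 1000) * 1000) * 1000)) <= pw (1980%:R / 1000%:R : R).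
Proof. have h := @pw_lbq R ((((1 * 1000 + 727) * 1000 + 158) * 1000 + 332)) ((((1 * 1000) * 1000) * 1000)) (1980%:R) (1000%:R). rewrite ?divr1 in h. by apply: h; lra. Qed.
Lemma ub_1e : pw (2980%:R / 1000%:R : R) <= ((((2 * 1000 + 395) * 1000 + 372) * 1000 + 235)) / ((((1 * 1000) * 1000) * 1000)).
Proof. have h := @pw_ubq R ((((2 * 1000 + 395) * 1000 + 372) * 1000 + 235)) ((((1 * 1000) * 1000) * 1000)) (2980%:R) (1000%:R). rewrite ?divr1 in h. by apply: h; lra. Qed.
Lemma ub_4 : pw (4%:R : R) <= ((((3 * 1000 + 31) * 1000 + 433) * 1000 + 134)) / ((((1 * 1000) * 1000) * 1000)).
Proof. have h := @pw_ubq R ((((3 * 1000 + 31) * 1000 + 433) * 1000 + 134)) ((((1 * 1000) * 1000) * 1000)) (4%:R) (1). rewrite ?divr1 in h. by apply: h; lra. Qed.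
End Num.

Section C.
Variable R : realType.
Local Notation pw a := (a `^ rexp R).

Lemma D_pos : 0 < pw 8 - pw 6.
Proof. have := lb_8 R; have := ub_6 R; lra. Qed.

Lemma c_lb : (((921 * 1000 + 600) * 1000 + 435)) / ((((1 * 1000) * 1000) * 1000)) <= cconst R.
Proof.
rewrite /cconst ler_pdivlMr; last exact: D_pos.
have := ub_8 R; have := lb_6 R. lra.
Qed.

Lemma c_ub : cconst R <= (((921 * 1000 + 600) * 1000 + 437)) / ((((1 * 1000) * 1000) * 1000)).
Proof.
rewrite /cconst ler_pdivrMr; last exact: D_pos.
have := lb_8 R; have := ub_6 R; lra.
Qed.

Lemma c_ge0 : 0 <= cconst R.
Proof. have := c_lb; lra. Qed.

Lemma c_le1 : cconst R <= 1.
Proof. have := c_ub; lra. Qed.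

Lemma c_exact : cconst R * pw 8 = cconst R * pw 6 + 1.
Proof.
have h : cconst R * (pw 8 - pw 6) = 1.
  by rewrite /cconst div1r mulVf // gt_eqF // D_pos.
lra.
Qed.
End C.
Section NC.
Variable R : realType.
Local Notation pw a := (a `^ rexp R).

Lemma lb_eq (a b l : R) : a = b -> l <= pw b -> l <= pw a.
Proof. by move=> ->. Qed.
Lemma ub_eq (a b u : R) : a = b -> pw b <= u -> pw a <= u.
Proof. by move=> ->. Qed.

Lemma comb_i {A B C la lb uc : R} : la <= A -> lb <= B -> C <= uc -> uc <= la + lb ->
  C <= A + B.
Proof. move=> *; lra. Qed.

Lemma comb_ii {c A C cl la uc : R} : cl <= c -> la <= A -> C <= uc -> 0 <= cl -> 0 <= la ->
  uc <= cl * la + 1 -> C <= c * A + 1.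
Proof. move=> *; nra. Qed.

Lemma comb_iii {K A C uk la uc : R} : K <= uk -> la <= A -> C <= uc -> 0 <= K -> 0 <= C ->
  uk * uc <= la + 1 -> K * C <= A + 1.
Proof. move=> *; nra. Qed.

Lemma comb_iv {c H G Zt C cl lh lg lz uc : R} : cl <= c -> lh <= H -> lg <= G -> lz <= Zt ->
  C <= uc -> 0 <= cl -> 0 <= lz -> uc <= lh + 2 * lg + cl * lz ->
  C <= H + 2 * G + c * Zt.
Proof. move=> *; nra. Qed.

Lemma comb_iv3 {c E C cl le uc : R} : cl <= c -> le <= E -> C <= uc -> 0 <= cl -> 0 <= le ->
  uc <= 1 + cl * le -> C <= 1 + c * E.
Proof. move=> *; nra. Qed.

Lemma comb_v {c F cl cu uf : R} : cl <= c -> c <= cu -> F <= uf -> 0 <= c -> 0 <= F ->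
  cu * uf <= cl + 2 -> c * F <= c + 2.
Proof. move=> *; nra. Qed.

Lemma num_i : pw (dec3 R 8956 + dec3 R 1036 + 1) <= pw (dec3 R 8956) + pw (dec3 R 1036).
Proof.
apply: (comb_i (@lb_eq (dec3 R 8956) _ _ (erefl _) (lb_8956 R)) (@lb_eq (dec3 R 1036) _ _ (erefl _) (lb_1036 R))
  (@ub_eq (dec3 R 8956 + dec3 R 1036 + 1) _ _ _ (ub_10992 R))); last by lra.
by rewrite /dec3; lra.
Qed.

Lemma num_ii : pw (dec3 R 10174 + 1) <= cconst R * pw (dec3 R 10174) + 1.
Proof.
apply: (comb_ii (c_lb R) (@lb_eq (dec3 R 10174) _ _ (erefl _) (lb_10174 R)) (@ub_eq (dec3 R 10174 + 1) _ _ _ (ub_11174 R))); try lra.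
all: by rewrite /dec3; lra.
Qed.

Lemma num_iii_a : pw (1 + 1 / dec3 R 10174) * pw (dec3 R 500 + 1) <= pw (dec3 R 500) + 1.
Proof.
apply: (comb_iii (@ub_eq (1 + 1 / dec3 R 10174) _ _ _ (ub_K R)) (@lb_eq (dec3 R 500) _ _ (erefl _) (lb_500 R)) (@ub_eq (dec3 R 500 + 1) _ _ _ (ub_1500 R))).
- by rewrite /dec3; field.
- by rewrite /dec3; lra.
- exact: pw_ge0.
- exact: pw_ge0.
- lra.
Qed.

Lemma num_iii_b : pw (1 + 1 / dec3 R 10174) * pw (dec3 R 8884 + 1) <= pw (dec3 R 8884) + 1.
Proof.
apply: (comb_iii (@ub_eq (1 + 1 / dec3 R 10174) _ _ _ (ub_K R)) (@lb_eq (dec3 R 8884) _ _ (erefl _) (lb_8884 R)) (@ub_eq (dec3 R 8884 + 1) _ _ _ (ub_9884 R))).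
- by rewrite /dec3; field.
- by rewrite /dec3; lra.
- exact: pw_ge0.
- exact: pw_ge0.
- lra.
Qed.

Lemma num_iv1 : pw (1 + 1/2 + 2 * (1000%:R / 2072%:R) + 5884%:R / 2072%:R) <=
  pw (1/2) + 2 * pw (1000%:R / 2072%:R) + cconst R * pw (5884%:R / 2072%:R).
Proof.
apply: (comb_iv (c_lb R) (lb_half R) (lb_g R) (lb_z0 R) (@ub_eq (1 + 1/2 + 2 * (1000%:R / 2072%:R) + 5884%:R / 2072%:R) _ _ _ (ub_dt R))); try lra.
all: by rewrite /dec3; field.
Qed.

Lemma num_iv2 :
  pw (1 + 1/2 + 2 * (1000%:R / 2072%:R) + 5884%:R / 2072%:R +
      (dec3 R 1980 * (1 + 1/2 + 2 * (1000%:R / 2072%:R)) - 5884%:R / 2072%:R)) <=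
  pw (1/2) + 2 * pw (1000%:R / 2072%:R) +
   cconst R * pw (5884%:R / 2072%:R +
      (dec3 R 1980 * (1 + 1/2 + 2 * (1000%:R / 2072%:R)) - 5884%:R / 2072%:R)).
Proof.
apply: (comb_iv (c_lb R) (lb_half R) (lb_g R) (@lb_eq (5884%:R / 2072%:R + (dec3 R 1980 * (1 + 1/2 + 2 * (1000%:R / 2072%:R)) - 5884%:R / 2072%:R)) _ _ _ (lb_z0A R)) (@ub_eq (1 + 1/2 + 2 * (1000%:R / 2072%:R) + 5884%:R / 2072%:R + (dec3 R 1980 * (1 + 1/2 + 2 * (1000%:R / 2072%:R)) - 5884%:R / 2072%:R)) _ _ _ (ub_dtA R))); try lra.
all: by rewrite /dec3; field.
Qed.

Lemma num_iv3 : pw (1 + dec3 R 1980) <= 1 + cconst R * pw (dec3 R 1980).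
Proof.
apply: (comb_iv3 (c_lb R) (@lb_eq (dec3 R 1980) _ _ (erefl _) (lb_e R)) (@ub_eq (1 + dec3 R 1980) _ _ _ (ub_1e R))); try lra.
all: by rewrite /dec3; lra.
Qed.

Lemma num_v : cconst R * pw 4 <= cconst R + 2.
Proof.
apply: (comb_v (c_lb R) (c_ub R) (ub_4 R)); try lra.
- exact: c_ge0.
- exact: pw_ge0.
Qed.


Lemma dec3_ge0 m : 0 <= dec3 R m.
Proof. by rewrite /dec3 divr_ge0 ?ler0n. Qed.

Lemma dec3_gt0 m : (0 < m)%N -> 0 < dec3 R m.
Proof. by move=> h; rewrite /dec3 divr_gt0 ?ltr0n. Qed.

Lemma lt_500_8884 : dec3 R 500 < dec3 R 8884.
Proof. rewrite /dec3; lra. Qed.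

Lemma K_ge0 : 0 <= pw (1 + 1 / dec3 R 10174).
Proof. exact: pw_ge0. Qed.

Lemma iv_consts : [/\ 0 < (1000%:R / 2072%:R : R), 0 < (5884%:R / 2072%:R : R),
  0 < dec3 R 1980 & 0 < dec3 R 1980 * (1 + 1/2 + 2 * (1000%:R / 2072%:R)) - 5884%:R / 2072%:R].
Proof. rewrite /dec3; split; lra. Qed.

Lemma iv_hyps (T W X Y Z : R) : Z < dec3 R 1980 * (T + W + X + Y) ->
  T <= dec3 R 2072 * Num.min (W / dec3 R 1036) (Num.min X (Num.min Y (Z / dec3 R 5884))) ->
  [/\ T / 2 <= W, 1000%:R / 2072%:R * T <= X, 1000%:R / 2072%:R * T <= Y,
      5884%:R / 2072%:R * T <= Z & Z <= dec3 R 1980 * (T + W + X + Y)].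
Proof.
move=> h1 h3.
set m := Num.min _ _ in h3.
have m1 : m <= W / dec3 R 1036 by rewrite /m ge_min lexx.
have m2 : m <= X by rewrite /m ge_min ge_min lexx orbT.
have m3 : m <= Y by rewrite /m ge_min ge_min ge_min lexx !orbT.
have m4 : m <= Z / dec3 R 5884 by rewrite /m ge_min ge_min ge_min lexx !orbT.
have k0 : 0 <= dec3 R 2072 by exact: dec3_ge0.
have t1 := le_trans h3 (ler_wpM2l k0 m1).
have t2 := le_trans h3 (ler_wpM2l k0 m2).
have t3 := le_trans h3 (ler_wpM2l k0 m3).
have t4 := le_trans h3 (ler_wpM2l k0 m4).
clear m1 m2 m3 m4 h3; clearbody m; move: t1 t2 t3 t4 h1; rewrite /dec3 => t1 t2 t3 t4 h1.
split; lra.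
Qed.

End NC.

Theorem lemma2p4 (R : realType) (t w x y z : nat) :
  let r := rexp R in
  let c := cconst R in
  let T := (t%:R : R) in let W := (w%:R : R) in let X := (x%:R : R) in
  let Y := (y%:R : R) in let Z := (z%:R : R) in
  (* (i) *)
  (X >= dec3 R 8956 * Z -> Y >= dec3 R 1036 * Z ->
     X `^ r + Y `^ r >= (X + Y + Z) `^ r) /\
  (* (ii) *)
  (X <= dec3 R 10174 * Y -> c * X `^ r + Y `^ r >= (X + Y) `^ r) /\
  (* (iii) *)
  (dec3 R 500 * Y <= X -> X <= dec3 R 8884 * Y ->
     X `^ r + Y `^ r >= (1 + 1 / dec3 R 10174) `^ r * (X + Y) `^ r) /\
  (* (iv) *)
  (Z < dec3 R 1980 * (T + W + X + Y) ->
   0 < T ->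
   T <= dec3 R 2072 * Num.min (W / dec3 R 1036)
                        (Num.min X (Num.min Y (Z / dec3 R 5884))) ->
     W `^ r + X `^ r + Y `^ r + c * Z `^ r >= (T + W + X + Y + Z) `^ r) /\
  (* (v) *)
  ((w <= minn x (minn y z))%N ->
     c * X `^ r + Y `^ r + Z `^ r >= c * (W + X + Y + Z) `^ r) /\
  (* (vi) *)
  ((x >= 6 * z)%N -> (y >= z)%N ->
     c * X `^ r + Y `^ r >= c * (X + Y + Z) `^ r).
Proof.
move=> r c T W X Y Z.
have hT : 0 <= T by rewrite /T ler0n.
have hW : 0 <= W by rewrite /W ler0n.
have hX : 0 <= X by rewrite /X ler0n.
have hY : 0 <= Y by rewrite /Y ler0n.
have hZ : 0 <= Z by rewrite /Z ler0n.
have c0 := c_ge0 R; have c1 := c_le1 R.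
rewrite /r /c.
split; [|split; [|split; [|split; [|split]]]].
- move=> h1 h2.
  exact: (@gen1 R (dec3 R 8956) (dec3 R 1036) X Y Z (dec3_ge0 R _) (dec3_ge0 R _)
    (num_i R) hX hY hZ h1 h2).
- move=> h1.
  exact: (@gen2 R (cconst R) (dec3 R 10174) X Y c0 (dec3_gt0 R 10174 isT)
    (num_ii R) hX hY h1).
- move=> h1 h2.
  exact: (@gen3 R ((1 + 1 / dec3 R 10174) `^ rexp R) (dec3 R 500) (dec3 R 8884) X Y
    (K_ge0 R) (dec3_gt0 R 500 isT) (lt_500_8884 R) (num_iii_a R) (num_iii_b R)
    hX hY h1 h2).
- move=> h1 h2 h3.
  have [a1 a2 a3 a4 a5] := @iv_hyps R T W X Y Z h1 h3.
  have [k1 k2 k3 k4] := iv_consts R.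
  exact: (@gen4 R (cconst R) (1000%:R / 2072%:R) (5884%:R / 2072%:R) (dec3 R 1980)
    T W X Y Z c0 k1 k2 k3 k4 (num_iv1 R) (num_iv2 R) (num_iv3 R) h2 a1 a2 a3 a4 a5).
- rewrite !leq_min => /andP [hx /andP [hy hz]].
  have e1 : W <= X by rewrite /W /X ler_nat.
  have e2 : W <= Y by rewrite /W /Y ler_nat.
  have e3 : W <= Z by rewrite /W /Z ler_nat.
  exact: (@gen5 R (cconst R) W X Y Z c0 c1 (num_v R) hW e1 e2 e3).
- move=> h6 hyz.
  have e1 : 6 * Z <= X by rewrite /Z /X -natrM ler_nat.
  have e2 : Z <= Y by rewrite /Z /Y ler_nat.
  have e3 : cconst R * 8 `^ rexp R <= cconst R * 6 `^ rexp R + 1 by rewrite c_exact.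
  exact: (@gen6 R (cconst R) X Y Z c0 c1 e3 hX hY hZ e1 e2).
Qed.
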